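(* Let $\gamma>0$ be such that $\sum_{k=1}^{N-1}\frac1{\nu_{k,N}}\leq\gamma$ for every $N\in\mathbb N$. Then for every $N\in\mathbb N$ and every $x\in\mathbb R^N$, $\langle x,K_Nx\rangle\geq\frac1{\gamma}N\sup_k|x_k-\overline x|^2$.
   Context: Fix $\mu>1$. For $N\in\mathbb N$, $K_N:\mathbb R^N\to\mathbb R^N$ is $(K_Nx)_k=\frac{\mu}{4\sin^2(\pi/N)}(2x_k-x_{k+1}-x_{k-1})$ with $x_{N+1}:=x_1$, $x_0:=x_N$; $\langle\cdot,\cdot\rangle$ is the Euclidean scalar product; $\overline x=\frac1N\sum_kx_k$; $\nu_{k,N}=\mu\frac{\sin^2(k\pi/N)}{\sin^2(\pi/N)}$, $k=0,\dots,N-1$, are the eigenvalues of $K_N$. *)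

(* Defs.v *)
From HB Require Import structures.
From mathcomp Require Import all_boot all_order all_algebra.
From mathcomp Require Import reals trigo.
Set Implicit Arguments. Unset Strict Implicit. Unset Printing Implicit Defensive.
Import Order.TTheory GRing.Theory Num.Theory.
Local Open Scope ring_scope.

(* Vectors of R^N are functions 'I_N -> R (0-based indices, cyclic
   neighbours via ordS / ord_pred, i.e. x_{N+1} := x_1, x_0 := x_N). *)

Definition KN (R : realType) (mu : R) (N : nat) (x : 'I_N -> R) : 'I_N -> R :=
  fun k => mu / (4 * sin (pi / N%:R) ^+ 2) * (2 * x k - x (ordS k) - x (ord_pred k)).

Definition nu (R : realType) (mu : R) (k N : nat) : R :=
  mu * sin (k%:R * pi / N%:R) ^+ 2 / sin (pi / N%:R) ^+ 2.

Definition dotp (R : realType) (N : nat) (x y : 'I_N -> R) : R :=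
  \sum_(i < N) x i * y i.

Definition mean (R : realType) (N : nat) (x : 'I_N -> R) : R :=
  (N%:R)^-1 * \sum_(i < N) x i.

(* sup_k |x_k - x-bar|^2 (finite max; all terms are >= 0) *)
Definition supdev (R : realType) (N : nat) (x : 'I_N -> R) : R :=
  \big[Num.max/0]_(k < N) `|x k - mean x| ^+ 2.

(* Main.v *)
Require Import Defs.
From HB Require Import structures.
From mathcomp Require Import all_boot all_order all_algebra.
From mathcomp Require Import reals trigo.
From mathcomp Require Import ring lra.

Import Order.TTheory GRing.Theory Num.Theory.
Local Open Scope ring_scope.
Section S.
Variable R : realType.

Lemma sin_per (x : R) (m : nat) : sin (x + pi *+ 2 * m%:R) = sin x.
Proof.
elim: m => [|m IH]; first by rewrite mulr0 addr0.
by rewrite -natr1 mulrDr mulr1 addrA sinD2pi.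
Qed.

Lemma cos_per (x : R) (m : nat) : cos (x + pi *+ 2 * m%:R) = cos x.
Proof.
elim: m => [|m IH]; first by rewrite mulr0 addr0.
by rewrite -natr1 mulrDr mulr1 addrA cosD2pi.
Qed.

Lemma sum_cos0 (N m : nat) (b : R) : (0 < N)%N ->
  sin (m%:R * ((pi : R) / N%:R)) != 0 ->
  \sum_(i < N) cos (2 * (m%:R * (pi / N%:R)) * i%:R + b) = 0.
Proof.
move=> N0 sa.
set a := m%:R * (pi / N%:R).
pose f (i : nat) := sin (2 * a * i%:R + b - a).
have hN : N%:R != 0 :> R by rewrite pnatr_eq0 -lt0n.
have key : forall i : nat, cos (2 * a * i%:R + b) = (2 * sin a)^-1 * (f i.+1 - f i).
  move=> i; rewrite /f.
  have -> : 2 * a * i.+1%:R + b - a = (2 * a * i%:R + b) + a by rewrite -natr1; ring.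
  rewrite sinD sinB.
  have s2 : 2 * sin a != 0 by rewrite mulf_neq0 // pnatr_eq0.
  by field.
under eq_bigr => i _ do rewrite key.
rewrite -mulr_sumr.
rewrite -(big_mkord xpredT (fun i => f i.+1 - f i)).
have := telescope_sumr f (leq0n N).
rewrite /index_iota subn0 => ->.
suff -> : f N = f 0%N by rewrite subrr mulr0.
rewrite /f.
have -> : 2 * a * N%:R + b - a = (b - a) + pi *+ 2 * m%:R.
  rewrite /a; rewrite -mulr_natr; field; exact: hN.
by rewrite sin_per mulr0 add0r.
Qed.

Variable N : nat.
Hypothesis N2 : (1 < N)%N.
Variable j : 'I_N.

Definition p : R := pi / N%:R.
Definition lam (k : nat) : R := 4 * sin (k%:R * p) ^+ 2.
Definition u (k : nat) (i : 'I_N) : R := cos (2 * (k%:R * p) * ((i : nat)%:R - (j : nat)%:R)).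
Definition Lap (y : 'I_N -> R) (i : 'I_N) : R := 2 * y i - y (ordS i) - y (ord_pred i).

Lemma N0 : N%:R != 0 :> R.
Proof. by rewrite pnatr_eq0 -lt0n ltnW. Qed.

Lemma sinkp_gt0 k : (0 < k < N)%N -> 0 < sin (k%:R * p).
Proof.
move=> /andP[k0 kN]; apply: sin_gt0_pi; apply/andP; split.
  by rewrite /p mulr_gt0 // ?divr_gt0 ?pi_gt0 // ltr0n // (ltn_trans _ N2).
have -> : k%:R * p = pi * (k%:R / N%:R) by rewrite /p; field; exact: N0.
rewrite gtr_pMr ?pi_gt0 // ltr_pdivrMr ?mul1r ?ltr_nat // ltr0n (ltn_trans _ N2) //.
Qed.

Lemma cos_shiftN k t : cos (2 * (k%:R * p) * (t + N%:R)) = cos (2 * (k%:R * p) * t).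
Proof.
have -> : 2 * (k%:R * p) * (t + N%:R) = 2 * (k%:R * p) * t + pi *+ 2 * k%:R.
  by rewrite /p -mulr_natr; field; exact: N0.
by rewrite cos_per.
Qed.

Lemma u_S k i : u k (ordS i) = cos (2 * (k%:R * p) * ((i : nat)%:R - (j : nat)%:R) + 2 * (k%:R * p)).
Proof.
rewrite /u /=; case: (ltnP i.+1 N) => h.
  by rewrite modn_small // -natr1; congr cos; ring.
have hN : i.+1 = N by apply/eqP; rewrite eqn_leq h ltn_ord.
have -> : (i.+1 %% N = 0)%N by rewrite hN modnn.
have eN : N%:R = i%:R + 1 :> R by rewrite natr1 hN.
rewrite -(cos_shiftN k) eN; congr cos; ring.
Qed.

Lemma u_P k i : u k (ord_pred i) = cos (2 * (k%:R * p) * ((i : nat)%:R - (j : nat)%:R) - 2 * (k%:R * p)).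
Proof.
rewrite /u /=; case: i => [[|i] hi] /=.
  rewrite add0n modn_small ?prednK ?ltn_predL ?(ltn_trans _ N2) //.
  have eN : N%:R = N.-1%:R + 1 :> R by rewrite natr1 prednK // (ltn_trans _ N2).
  have -> : 2 * (k%:R * p) * (0 - (j:nat)%:R) - 2 * (k%:R * p) = 2 * (k%:R * p) * (N.-1%:R - (j:nat)%:R - N%:R) by rewrite eN; ring.
  by rewrite -(cos_shiftN k (N.-1%:R - (j:nat)%:R - N%:R)); congr cos; ring.
rewrite modnDr modn_small ?(ltn_trans _ hi) // -[in RHS]natr1; congr cos; ring.
Qed.

Lemma Lap_u k i : Lap (u k) i = lam k * u k i.
Proof.
rewrite /Lap u_S u_P /lam /u.
set X := 2 * (k%:R * p) * _.
have c2 : cos (2 * (k%:R * p)) = 1 - 2 * sin (k%:R * p) ^+ 2.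
  by rewrite mulr_natl cos_mulr2n cos2sin2 -mulr_natl; ring.
rewrite cosD cosB c2; ring.
Qed.


Lemma sumrD_ (I : finType) (F G : I -> R) : \sum_i (F i + G i) = \sum_i F i + \sum_i G i.
Proof. exact: big_split. Qed.

Lemma u_diag k : u k j = 1.
Proof. by rewrite /u subrr mulr0 cos0. Qed.

Lemma sum_u_k i : \sum_(1 <= k < N) u k i = N%:R * (i == j)%:R - 1.
Proof.
have full : \sum_(0 <= k < N) u k i = N%:R * (i == j)%:R.
  case: eqVneq => [->|ne].
    under eq_bigr do rewrite u_diag.
    by rewrite sumr_const_nat subn0 mulr1.
  rewrite mulr0 big_mkord.
  case: (ltngtP i j) => hij.
  - rewrite (eq_bigr (fun k : 'I_N => cos (2 * ((j - i)%:R * p) * (k : nat)%:R + 0))).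
      apply: sum_cos0; first exact: (ltn_trans _ N2).
      by rewrite gt_eqF // sinkp_gt0 // subn_gt0 hij /= (leq_ltn_trans (leq_subr _ _)).
    move=> k _; rewrite /u -cosN natrB ?(ltnW hij) //; congr cos; ring.
  - rewrite (eq_bigr (fun k : 'I_N => cos (2 * ((i - j)%:R * p) * (k : nat)%:R + 0))).
      apply: sum_cos0; first exact: (ltn_trans _ N2).
      by rewrite gt_eqF // sinkp_gt0 // subn_gt0 hij /= (leq_ltn_trans (leq_subr _ _)).
    move=> k _; rewrite /u natrB ?(ltnW hij) //; congr cos; ring.
  - by move: ne; rewrite (val_inj hij) eqxx.
move: full; rewrite big_ltn ?(ltn_trans _ N2) //.
have -> : u 0 i = 1 by rewrite /u mul0r mulr0 mul0r cos0.
by move=> <-; ring.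
Qed.

Lemma sum_u_i k : (0 < k < N)%N -> \sum_i u k i = 0.
Proof.
move=> hk.
rewrite (eq_bigr (fun i : 'I_N => cos (2 * (k%:R * p) * (i : nat)%:R + (- (2 * (k%:R * p) * (j : nat)%:R))))).
  apply: sum_cos0; first exact: (ltn_trans _ N2).
  by rewrite gt_eqF // sinkp_gt0.
by move=> i _; rewrite /u; congr cos; ring.
Qed.

Lemma lam_gt0 k : (0 < k < N)%N -> 0 < lam k.
Proof. by move=> hk; rewrite /lam mulr_gt0 // exprn_gt0 // sinkp_gt0. Qed.

Definition g (i : 'I_N) : R := N%:R^-1 * \sum_(1 <= k < N) (lam k)^-1 * u k i.

Lemma Lap_g i : Lap g i = (i == j)%:R - N%:R^-1.
Proof.
rewrite /Lap /g.
set A := \sum_(1 <= k < N) _; set B := \sum_(1 <= k < N) _; set C := \sum_(1 <= k < N) _.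
have -> : 2 * (N%:R^-1 * A) - N%:R^-1 * B - N%:R^-1 * C = N%:R^-1 * (2 * A - B - C) by ring.
rewrite /A /B /C mulr_sumr -!sumrB.
rewrite (eq_big_nat _ _ (F2 := fun k => u k i)); last first.
  move=> k /andP[k1 kN].
  transitivity ((lam k)^-1 * Lap (u k) i); first by rewrite /Lap; ring.
  by rewrite Lap_u mulKf // gt_eqF // lam_gt0 // k1.
rewrite sum_u_k; field; exact: N0.
Qed.

Lemma dot_Lap (x y : 'I_N -> R) :
  dotp x (Lap y) = \sum_i (x (ordS i) - x i) * (y (ordS i) - y i).
Proof.
rewrite /dotp /Lap.
have -> : \sum_i x i * (2 * y i - y (ordS i) - y (ord_pred i)) =
   \sum_i x i * (y i - y (ordS i)) + \sum_i x i * (y i - y (ord_pred i)).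
  by rewrite -sumrD_; apply: eq_bigr => i _; ring.
rewrite [X in _ + X](reindex_inj (@ordS_inj N)) /= -sumrD_.
by apply: eq_bigr => i _; rewrite ordSK; ring.
Qed.

Lemma dot_e (y : 'I_N -> R) : dotp y (Lap g) = y j - mean y.
Proof.
rewrite /dotp; under eq_bigr do rewrite Lap_g.
rewrite (eq_bigr (fun i => y i * (i == j)%:R - N%:R^-1 * y i)); last by move=> i _; ring.
rewrite sumrB -mulr_sumr (bigD1 j) //= eqxx mulr1 big1 ?addr0 //.
by move=> i /negbTE ->; rewrite mulr0.
Qed.

Lemma Qg : dotp g (Lap g) = N%:R^-1 * \sum_(1 <= k < N) (lam k)^-1.
Proof.
rewrite dot_e /mean.
have -> : \sum_i g i = 0.
  rewrite /g -mulr_sumr exchange_big /= big_nat_cond big1 ?mulr0 //.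
  move=> k /andP[/andP[k1 kN] _].
  by rewrite -mulr_sumr sum_u_i ?mulr0 // k1.
rewrite mulr0 subr0 /g.
by congr (_ * _); apply: eq_bigr => k _; rewrite u_diag mulr1.
Qed.


Lemma Q_ge0 (x : 'I_N -> R) : 0 <= dotp x (Lap x).
Proof. by rewrite dot_Lap sumr_ge0 // => i _; rewrite -expr2 sqr_ge0. Qed.


Lemma S_gt0 : 0 < \sum_(1 <= k < N) (lam k)^-1.
Proof.
rewrite big_ltn // ltr_pwDl ?invr_gt0 ?lam_gt0 //.
rewrite big_nat_cond sumr_ge0 // => k /andP[/andP[k1 kN] _].
by rewrite ltW // invr_gt0 lam_gt0 // (ltn_trans _ k1).
Qed.

Lemma CS (x : 'I_N -> R) :
  (x j - mean x) ^+ 2 <= (N%:R^-1 * \sum_(1 <= k < N) (lam k)^-1) * dotp x (Lap x).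
Proof.
set G := N%:R^-1 * _.
have G0 : 0 < G by rewrite mulr_gt0 ?invr_gt0 ?ltr0n ?(ltn_trans _ N2) // S_gt0.
rewrite -dot_e /G -Qg; clear G G0.
have G0 : 0 < dotp g (Lap g) by rewrite Qg mulr_gt0 ?invr_gt0 ?ltr0n ?(ltn_trans _ N2) // S_gt0.
move: G0; rewrite !dot_Lap.
set B := \sum_i (x _ - _) * (g _ - _).
set G := \sum_i (g _ - _) * _.
set Q := \sum_i (x _ - _) * _.
move=> G0.
set s := B / G.
have h : 0 <= Q - 2 * s * B + s ^+ 2 * G.
  have -> : Q - 2 * s * B + s ^+ 2 * G =
      \sum_i ((x (ordS i) - x i) - s * (g (ordS i) - g i)) ^+ 2.
    transitivity (\sum_i ((x (ordS i) - x i) * (x (ordS i) - x i) +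
        ((- (2 * s)) * ((x (ordS i) - x i) * (g (ordS i) - g i)) +
         s ^+ 2 * ((g (ordS i) - g i) * (g (ordS i) - g i))))); last first.
      by apply: eq_bigr => i _; ring.
    rewrite !sumrD_ -!mulr_sumr /Q /B /G; ring.
  by rewrite sumr_ge0 // => i _; rewrite sqr_ge0.
have sG : s * G = B by rewrite /s divfK // gt_eqF.
nra.
Qed.

End S.

Lemma KN_Lap (R : realType) (mu : R) (N : nat) (x : 'I_N -> R) :
  dotp x (KN mu x) = mu / (4 * sin (pi / N%:R) ^+ 2) * dotp x (Lap R N x).
Proof.
by rewrite /dotp /KN mulr_sumr; apply: eq_bigr => i _; rewrite /Lap; ring.
Qed.

Lemma small_mean (R : realType) (N : nat) (x : 'I_N -> R) (j : 'I_N) :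
  (N <= 1)%N -> x j - mean x = 0.
Proof.
case: N x j => [|[|N]] x j // _; first by case: j.
by rewrite /mean big_ord1 [j]ord1 invr1 mul1r subrr.
Qed.

Theorem lemma5p2 (R : realType) (mu gamma : R) (hmu : 1 < mu) (hgamma : 0 < gamma)
  (hsum : forall N : nat, \sum_(1 <= k < N) (nu mu k N)^-1 <= gamma) :
  forall (N : nat) (x : 'I_N -> R),
    gamma^-1 * N%:R * supdev x <= dotp x (KN mu x).
Proof.
move=> N x.
set c := mu / (4 * sin (pi / N%:R) ^+ 2).
have mu0 : 0 < mu by apply: lt_trans hmu.
have c0 : 0 <= c.
  by apply: divr_ge0; [exact: ltW | apply: mulr_ge0 => //; exact: sqr_ge0].
have Q0 := Q_ge0 R N x.
set Q := dotp x (Lap R N x) in Q0.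
rewrite KN_Lap -/c -/Q.
have ig0 : 0 < gamma^-1 by rewrite invr_gt0.
have key : forall j : 'I_N, gamma^-1 * N%:R * (x j - mean x) ^+ 2 <= c * Q.
  move=> j; case: (ltnP 1 N) => hN; last first.
    by rewrite small_mean // expr0n /= mulr0 mulr_ge0.
  have hS := hsum N.
  set S := \sum_(1 <= k < N) (lam R N k)^-1.
  have sp : 0 < sin (pi / N%:R) :> R.
    by have := sinkp_gt0 R N hN 1%N; rewrite mul1r /p => /(_ hN).
  have s0 : sin (pi / N%:R) != 0 :> R by rewrite gt_eqF.
  have cpos : 0 < c by rewrite /c divr_gt0 // mulr_gt0 // exprn_gt0.
  have enu : \sum_(1 <= k < N) (nu mu k N)^-1 = c^-1 * S.
    rewrite /S mulr_sumr; apply: eq_big_nat => k hk.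
    have sk : sin (k%:R * p R N) != 0 by rewrite gt_eqF // sinkp_gt0.
    move: sk; rewrite /nu /lam /c /p -[k%:R * pi / N%:R]mulrA => sk.
    by field; rewrite ?s0 ?sk ?gt_eqF.
  rewrite enu mulrC ler_pdivrMr // in hS.
  have cs := CS R N hN j x; rewrite -/S -/Q in cs.
  apply: (le_trans (y := gamma^-1 * N%:R * ((N%:R^-1 * S) * Q))).
    by rewrite ler_wpM2l // mulr_ge0 // ltW.
  have -> : gamma^-1 * N%:R * (N%:R^-1 * S * Q) = gamma^-1 * S * Q.
    by field; rewrite gt_eqF // (N0 R N hN).
  apply: (le_trans (y := gamma^-1 * (gamma * c) * Q)).
    by rewrite ler_wpM2r // ler_wpM2l // ltW.
  by rewrite mulrA mulVf ?mul1r // gt_eqF.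
case: (posnP N) => [N0'|Npos].
  rewrite (_ : N%:R = 0 :> R) ?mulr0 ?mul0r; first exact: mulr_ge0.
  by rewrite N0'.
have gN : 0 < gamma^-1 * N%:R by rewrite mulr_gt0 // ltr0n.
have hb : supdev x <= gamma * N%:R^-1 * (c * Q).
  rewrite /supdev; apply: bigmax_le => [|k _].
    by apply: mulr_ge0; [apply: mulr_ge0; [exact: ltW | rewrite invr_ge0 ler0n] | exact: mulr_ge0].
  rewrite real_normK ?num_real //.
  rewrite -(ler_pM2l gN).
  have -> : gamma^-1 * N%:R * (gamma * N%:R^-1 * (c * Q)) = c * Q.
    by field; rewrite pnatr_eq0 -lt0n Npos gt_eqF.
  exact: key.
apply: le_trans (ler_wpM2l (ltW gN) hb) _.
rewrite le_eqVlt; apply/orP; left; apply/eqP.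
by field; rewrite pnatr_eq0 -lt0n Npos gt_eqF.
Qed.
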